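(* Let $V:\mathbb{R}^{d_1}\times\mathbb{R}^{d_2}\to\mathbb{R}^n$ be residual-homogeneous, $V(\theta_1,\theta_2)=\Phi\theta_1+g(\theta_2)$, where $\Phi\in\mathbb{R}^{n\times d_1}$ has full rank and $g$ is continuously differentiable and $h$-homogeneous, and suppose there are constants $C,\ell>0$ with $\Vert V(\theta)\Vert_\mu\le C\Vert\theta\Vert^\ell$ for all $\theta$. Let $\Pi_\Phi$ be the projection onto the column span of $\Phi$. Then for any initial condition, if $\theta(t)$ follows $\dot\theta=-\nabla V(\theta)^T A\,(V(\theta)-V^* )$, we have $$\liminf_{t\to\infty}\Vert V(\theta(t))-V^*\Vert_\mu\le\Big(1+\frac{1+\gamma}{1-\gamma}\Big)\Vert V^*-\Pi_\Phi V^*\Vert_\mu.$$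
   Context: A Markov reward process has finite state space with $n$ states, transition matrix $P$ defining an irreducible, aperiodic Markov chain with stationary distribution $\mu$, a finite reward function $r(s,s')$, and discount factor $\gamma\in[0,1)$. Let $R(s)=\mathbb{E}_{s'\sim P(\cdot|s)}[r(s,s')]$ and let $V^*\in\mathbb{R}^n$ be the unique solution of $V^*=R+\gamma PV^*$. Let $D_\mu=\mathrm{diag}(\mu)$ and $A:=D_\mu(I-\gamma P)$. For $x\in\mathbb{R}^n$, $\Vert x\Vert_\mu^2=x^TD_\mu x$; $\Vert\theta\Vert$ is the Euclidean norm. $\nabla V(\theta)$ is the Jacobian of $V$ with respect to $\theta=(\theta_1,\theta_2)$. A differentiable $f:\mathbb{R}^k\to\mathbb{R}^m$ is $h$-homogeneous (for $h\in\mathbb{R}$) if $f(x)=h\,\nabla f(x)\,x$ for all $x$. The projection $\Pi_\Phi$ is taken orthogonal with respect to $\langle x,y\rangle_\mu=x^TD_\mu y$. *)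

(* Defs.v *)
(* R : realType; vectors are ROW vectors 'rV[R]_k *)
From HB Require Import structures.
From mathcomp Require Import all_boot all_order all_algebra.
From mathcomp Require Import all_classical all_reals all_analysis.
Set Implicit Arguments. Unset Strict Implicit. Unset Printing Implicit Defensive.
Import Order.TTheory GRing.Theory Num.Theory.
Import numFieldNormedType.Exports.
Local Open Scope ring_scope.

Section Defs.
Variable R : realType.

Definition stochastic n (P : 'M[R]_n) :=
  (forall i j, 0 <= P i j) /\ (forall i, \sum_j P i j = 1).

Definition irreducible n (P : 'M[R]_n) :=
  forall i j, exists k : nat, 0 < (P ^+ k) i j.

(* aperiodic: for every state i, the gcd of the return times
   {k >= 1 | P^k(i,i) > 0} is 1, i.e. no d > 1 divides all of them *)
Definition aperiodic n (P : 'M[R]_n) :=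
  forall i, forall d : nat, (1 < d)%N ->
    ~ (forall k : nat, (0 < k)%N -> 0 < (P ^+ k) i i -> (d %| k)%N).

Definition stationary_dist n (P : 'M[R]_n) (mu : 'rV[R]_n) :=
  (forall i, 0 <= mu 0 i) /\ \sum_i mu 0 i = 1 /\ mu *m P = mu.

Definition Dmu n (mu : 'rV[R]_n) : 'M[R]_n := diag_mx mu.

Definition Amat n (mu : 'rV[R]_n) (gamma : R) (P : 'M[R]_n) : 'M[R]_n :=
  Dmu mu *m (1%:M - gamma *: P).

Definition mu_norm n (mu : 'rV[R]_n) (x : 'rV[R]_n) : R :=
  Num.sqrt ((x *m Dmu mu *m x^T) 0 0).

Definition eucl_norm k (x : 'rV[R]_k) : R := Num.sqrt (\sum_i x 0 i ^+ 2).

Definition exp_reward n (P : 'M[R]_n) (r : 'I_n -> 'I_n -> R) (s : 'I_n) : R :=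
  \sum_s' P s s' * r s s'.

(* p = Pi_Phi v : the mu-orthogonal projection of v onto the column span of Phi
   (Phi : n x d1, vectors written as rows, so Phi theta1 is theta1 *m Phi^T) *)
Definition is_mu_proj n d1 (mu : 'rV[R]_n) (Phi : 'M[R]_(n, d1)) (v p : 'rV[R]_n) :=
  (exists w : 'rV[R]_d1, p = w *m Phi^T) /\ (v - p) *m Dmu mu *m Phi = 0.

(* residual-homogeneous parametrization V(theta1, theta2) = Phi theta1 + g theta2,
   with theta = row_mx theta1 theta2 *)
Definition resV n d1 d2 (Phi : 'M[R]_(n, d1)) (g : 'rV[R]_d2 -> 'rV[R]_n)
  (theta : 'rV[R]_(d1 + d2)) : 'rV[R]_n :=
  lsubmx theta *m Phi^T + g (rsubmx theta).

(* f is h-homogeneous: f x = h * grad f(x) x. With row vectors, grad f(x) x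
   is x *m 'J f x ('J is the transposed Jacobian of derive.v) *)
Definition homogeneous k m (h : R) (f : 'rV[R]_k -> 'rV[R]_m) :=
  forall x, f x = h *: (x *m 'J f x).

End Defs.

(* Main.v *)
Require Import Defs.
From HB Require Import structures.
From mathcomp Require Import all_boot all_order all_algebra.
From mathcomp Require Import all_classical all_reals all_analysis.
From mathcomp Require Import ring lra.
Import Order.TTheory GRing.Theory Num.Theory.
Import numFieldNormedType.Exports.
Local Open Scope classical_set_scope.
Local Open Scope ring_scope.

Section S.
Variable R : realType.

Lemma continuous_mulmxr m a b (M : 'M[R]_(a,b)) :
  continuous (fun x : 'M[R]_(m,a) => x *m M).
Proof.
move=> u A /nbhs_ballP[e /= e0 eA].
set K := 1 + \sum_(k < a) \sum_(j < b) `|M k j|.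
have K0 : 0 < K by rewrite ltr_pwDl // sumr_ge0 // => k _; rewrite sumr_ge0.
apply/nbhs_ballP; exists (e / K) => /=; first by rewrite divr_gt0.
move=> v [_ uv]; apply: eA; split => // i j.
rewrite /ball /= !mxE -sumrB.
apply: (le_lt_trans (ler_norm_sum _ _ _)).
apply: (@le_lt_trans _ _ (\sum_(k < a) e / K * `|M k j|)).
  apply: ler_sum => k _; rewrite -mulrBl normrM ler_wpM2r //.
  by have := uv i k; rewrite /ball /= => /ltW.
rewrite -mulr_sumr mulrAC ltr_pdivrMr // ltr_pM2l //.
have : \sum_(k < a) `|M k j| <= \sum_(k < a) \sum_(j0 < b) `|M k j0|.
  by apply: ler_sum => k _; rewrite (bigD1 j) //= lerDl sumr_ge0.
rewrite /K; lra.
Qed.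
End S.

Section S2.
Variable R : realType.


Lemma diff_mulmxr m a b (M : 'M[R]_(a,b)) (x : 'M[R]_(m,a)) :
  differentiable (fun x : 'M[R]_(m,a) => x *m M) x /\
  'd (fun x : 'M[R]_(m,a) => x *m M) x = (fun y => y *m M) :> (_ -> _).
Proof.
split.
  have H := (@linear_differentiable _ _ _ (mulmxr M)).
  exact: (H _ x (@continuous_mulmxr R _ _ _ M)).
have H := (@diff_lin _ _ _ (mulmxr M)).
exact (H _ x (@continuous_mulmxr R _ _ _ M)).
Qed.

Variables (n d1 d2 : nat) (Phi : 'M[R]_(n, d1)) (g : 'rV[R]_d2 -> 'rV[R]_n).
Hypothesis gd : forall x, differentiable g x.

Lemma resV_split : resV Phi g =
  ((fun x : 'rV[R]_d1 => x *m Phi^T) \o (lsubmx : 'rV[R]_(d1+d2) -> _)) + (g \o (rsubmx : 'rV[R]_(d1+d2) -> _)).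
Proof. by apply/funext => th. Qed.

Lemma resV_diff th : differentiable (resV Phi g) th.
Proof.
rewrite resV_split; apply: differentiableD.
  apply: differentiable_comp; first exact: differentiable_lsubmx.
  exact: (diff_mulmxr 1 _ _ Phi^T _).1.
apply: differentiable_comp; first exact: differentiable_rsubmx.
exact: gd.
Qed.

Lemma resVJ (th u : 'rV[R]_(d1+d2)) : u *m 'J (resV Phi g) th =
  lsubmx u *m Phi^T + rsubmx u *m 'J g (rsubmx th).
Proof.
rewrite -deriveEjacobian; last exact: resV_diff.
rewrite deriveE; last exact: resV_diff.
rewrite resV_split.
have D1 : differentiable ((fun x : 'rV[R]_d1 => x *m Phi^T) \o (lsubmx : 'rV[R]_(d1+d2) -> _)) th.
  apply: differentiable_comp; first exact: differentiable_lsubmx.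
  exact: (diff_mulmxr 1 _ _ Phi^T _).1.
have D2 : differentiable (g \o (rsubmx : 'rV[R]_(d1+d2) -> _)) th.
  apply: differentiable_comp; first exact: differentiable_rsubmx.
  exact: gd.
rewrite (diffD D1 D2).
have E1 : 'd ((fun x : 'rV[R]_d1 => x *m Phi^T) \o (lsubmx : 'rV[R]_(d1+d2) -> _)) th u = lsubmx u *m Phi^T.
  rewrite (diff_comp (differentiable_lsubmx _) (diff_mulmxr 1 _ _ Phi^T _).1).
  rewrite (diff_mulmxr 1 _ _ Phi^T _).2.
  by rewrite (@diff_lin _ _ _ lsubmx _ (@continuous_lsubmx _ _ _ _)).
have E2 : 'd (g \o (rsubmx : 'rV[R]_(d1+d2) -> _)) th u = rsubmx u *m 'J g (rsubmx th).
  rewrite (diff_comp (differentiable_rsubmx _) (gd _)).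
  rewrite (@diff_lin _ _ _ rsubmx _ (@continuous_rsubmx _ _ _ _)).
  by rewrite /jacobian mul_rV_lin1.
exact: (congr2 +%R E1 E2).
Qed.
End S2.

Section Q.
Variable R : realType.
Variable n : nat.
Variable mu : 'rV[R]_n.
Hypothesis mu0 : forall i, 0 <= mu 0 i.

Definition Qf (x : 'rV[R]_n) := \sum_i mu 0 i * x 0 i ^+ 2.
Definition Bf (x y : 'rV[R]_n) := \sum_i mu 0 i * (x 0 i * y 0 i).

Lemma Qf_ge0 x : 0 <= Qf x.
Proof. by apply: sumr_ge0 => i _; rewrite mulr_ge0 // sqr_ge0. Qed.

Lemma BfDl x y z : Bf (x + y) z = Bf x z + Bf y z.
Proof. by rewrite /Bf -big_split /=; apply: eq_bigr => i _; rewrite !mxE; ring. Qed.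

Lemma Amat_form gamma P (x y : 'rV[R]_n) :
  (x *m Amat mu gamma P *m y^T) 0 0 = Bf x y - gamma * Bf x (y *m P^T).
Proof.
rewrite /Amat /Dmu mulmxA mul_mx_diag mulmxBr mulmx1 -scalemxAr mulmxBl.
rewrite -scalemxAl -mulmxA !mxE /Bf.
congr (_ - gamma * _); apply: eq_bigr => i _; rewrite !mxE.
- ring.
rewrite !mulr_sumr; apply: eq_bigr => k _; rewrite !mxE; ring.
Qed.

Lemma mu_normE x : mu_norm mu x = Num.sqrt (Qf x).
Proof.
rewrite /mu_norm /Dmu mul_mx_diag !mxE /Qf; congr Num.sqrt.
by apply: eq_bigr => i _; rewrite !mxE; ring.
Qed.

Lemma young (eps : R) x y : 0 < eps ->
  `|2 * Bf x y| <= eps * Qf y + Qf x / eps.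
Proof.
move=> e0; rewrite /Bf /Qf mulr_sumr mulr_sumr mulr_suml -big_split /=.
apply: (le_trans (ler_norm_sum _ _ _)); apply: ler_sum => i _.
have h1 : `|2 * (x 0 i * y 0 i)| <= eps * y 0 i ^+ 2 + x 0 i ^+ 2 / eps.
  have ie : eps * eps^-1 = 1 by rewrite mulfV // gt_eqF.
  have ie0 : 0 < eps^-1 by rewrite invr_gt0.
  have E1 : eps * y 0 i ^+ 2 + x 0 i ^+ 2 / eps - 2 * (x 0 i * y 0 i)
     = eps^-1 * (eps * y 0 i - x 0 i) ^+ 2.
    by field; rewrite gt_eqF.
  have E2 : eps * y 0 i ^+ 2 + x 0 i ^+ 2 / eps + 2 * (x 0 i * y 0 i)
     = eps^-1 * (eps * y 0 i + x 0 i) ^+ 2.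
    by field; rewrite gt_eqF.
  have F1 : 0 <= eps^-1 * (eps * y 0 i - x 0 i) ^+ 2 by rewrite mulr_ge0 // ?sqr_ge0 // ltW.
  have F2 : 0 <= eps^-1 * (eps * y 0 i + x 0 i) ^+ 2 by rewrite mulr_ge0 // ?sqr_ge0 // ltW.
  rewrite ler_norml; apply/andP; split; lra.
rewrite mulrCA normrM ger0_norm //.
have -> : eps * (mu 0 i * y 0 i ^+ 2) + mu 0 i * x 0 i ^+ 2 / eps =
   mu 0 i * (eps * y 0 i ^+ 2 + x 0 i ^+ 2 / eps) by ring.
by rewrite ler_wpM2l.
Qed.


Lemma jensen (p x : 'I_n -> R) : (forall j, 0 <= p j) -> \sum_j p j = 1 ->
  (\sum_j p j * x j) ^+ 2 <= \sum_j p j * x j ^+ 2.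
Proof.
move=> p0 p1; set m := \sum_j p j * x j.
have Em : m = \sum_j p j * x j by [].
clearbody m.
have H : 0 <= \sum_j p j * (x j - m) ^+ 2.
  by apply: sumr_ge0 => j _; rewrite mulr_ge0 // sqr_ge0.
have E : \sum_j p j * (x j - m) ^+ 2 =
   \sum_j p j * x j ^+ 2 - 2 * m * (\sum_j p j * x j) + m ^+ 2 * \sum_j p j.
  rewrite !mulr_sumr -sumrB -big_split /=; apply: eq_bigr => j _; ring.
rewrite E p1 -Em in H; lra.
Qed.

Lemma QfP (P : 'M[R]_n) y : stochastic P -> mu *m P = mu ->
  Qf (y *m P^T) <= Qf y.
Proof.
move=> [P0 P1] muP; rewrite /Qf.
apply: (@le_trans _ _ (\sum_i mu 0 i * \sum_j P i j * y 0 j ^+ 2)).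
  apply: ler_sum => i _; apply: ler_wpM2l => //; rewrite !mxE.
  have -> : \sum_j y 0 j * P^T j i = \sum_j P i j * y 0 j.
    by apply: eq_bigr => j _; rewrite mxE mulrC.
  exact: jensen.
rewrite (eq_bigr (fun i => \sum_j mu 0 i * P i j * y 0 j ^+ 2)); last first.
  by move=> i _; rewrite mulr_sumr; apply: eq_bigr => j _; rewrite mulrA.
rewrite exchange_big /=; rewrite le_eqVlt; apply/orP; left; apply/eqP; apply: eq_bigr => j _.
rewrite -mulr_suml; congr (_ * _).
by rewrite -{2}muP mxE.
Qed.


Lemma Bf_diag x : Bf x x = Qf x.
Proof. by apply: eq_bigr => i _; rewrite expr2. Qed.

Lemma lyap_bound (gamma : R) (P : 'M[R]_n) e d :
  0 <= gamma -> gamma < 1 -> stochastic P -> mu *m P = mu ->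
  - (((e + d) *m Amat mu gamma P *m e^T) 0 0) <=
  - ((1 - gamma) / 2) * Qf e + (1 + gamma) ^+ 2 / (2 * (1 - gamma)) * Qf d.
Proof.
move=> g0 g1 sP muP.
rewrite Amat_form !BfDl Bf_diag.
set eps := (1 - gamma) / (1 + gamma).
have eps0 : 0 < eps by apply: divr_gt0; lra.
have QP := @QfP P e sP muP.
have Qe0 := Qf_ge0 e.
have Qd0 := Qf_ge0 d.
have Y1 := @young 1 e (e *m P^T) (@ltr01 R).
have Y2 := @young eps d e eps0.
have Y3 := @young eps d (e *m P^T) eps0.
move: Y1 Y2 Y3; rewrite !ler_norml => /andP[_ Y1] /andP[Y2 _] /andP[_ Y3].
have F1 : gamma * Bf e (e *m P^T) <= gamma * Qf e.
  by apply: ler_wpM2l => //; rewrite mul1r divr1 in Y1; lra.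
have F3 : gamma * Bf d (e *m P^T) <= gamma * ((eps * Qf e + Qf d / eps) / 2).
  apply: ler_wpM2l => //.
  have : eps * Qf (e *m P^T) <= eps * Qf e by apply: ler_wpM2l => //; exact: ltW.
  lra.
have E1 : (1 + gamma) * eps = 1 - gamma by rewrite /eps; field; apply/eqP; lra.
have E2 : (1 + gamma) * (Qf d / eps) = (1 + gamma) ^+ 2 / (1 - gamma) * Qf d.
  by rewrite /eps; field; apply/andP; split; apply/eqP; lra.
have E3 : (1 + gamma) ^+ 2 / (2 * (1 - gamma)) * Qf d = ((1 + gamma) ^+ 2 / (1 - gamma) * Qf d) / 2.
  by field; apply/eqP; lra.
rewrite E3 -E2.
have E4 : (1 + gamma) * (eps * Qf e) = (1 - gamma) * Qf e by rewrite mulrA E1.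
nra.
Qed.

End Q.

Section D.
Variable R : realType.

Lemma entry_is_derive k (f : R -> 'rV[R]_k) (t : R) (df : 'rV[R]_k) :
  is_derive t 1 f df -> forall i, is_derive t 1 (fun s => f s 0 i) (df 0 i).
Proof.
move=> H i.
have dv : derivable f t 1 by exact: ex_derive.
have dvi := (derivable_mxP f t 1).1 dv 0 i.
apply: DeriveDef => //.
have := derive_mx dv; rewrite (@derive_val _ _ _ _ _ _ _ H) => ->.
by rewrite mxE.
Qed.

Lemma sumsq_is_derive k (f : R -> 'rV[R]_k) (t : R) (df : 'rV[R]_k)
  (c w : 'I_k -> R) : is_derive t 1 f df ->
  is_derive t 1 (fun s => \sum_i c i * (f s 0 i - w i) ^+ 2)
    (\sum_i c i * (2 * (f t 0 i - w i) * df 0 i)).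
Proof.
move=> H.
have -> : (fun s => \sum_i c i * (f s 0 i - w i) ^+ 2) =
  \sum_i (fun s => c i * (f s 0 i - w i) ^+ 2).
  by rewrite fct_sumE.
apply: is_derive_sum => i.
have Hi := @entry_is_derive _ f t df H i.
have H2 : is_derive t 1 (fun s => f s 0 i - w i) (df 0 i - 0).
  exact: (is_deriveB (f:=fun s => f s 0 i) (g:=cst (w i))).
have H3 := is_deriveX 2 H2.
have H4 := is_deriveZ (c i) H3.
have -> : (fun s => c i * (f s 0 i - w i) ^+ 2) = c i \*: ((fun s => f s 0 i - w i) ^+ 2).
  by apply/funext => s.
have -> : c i * (2 * (f t 0 i - w i) * df 0 i) =
   c i *: ((2 * (f t 0 i - w i) ^+ 2.-1) *: (df 0 i - 0)).
  rewrite subr0 /= /GRing.scale /=; ring.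
exact H4.

Qed.

Lemma g_zero d2 n (g : 'rV[R]_d2 -> 'rV[R]_n) h : h < 0 ->
  (forall x, differentiable g x) -> homogeneous h g -> forall x, g x = 0.
Proof.
move=> hlt gd hom x.
pose phi := fun t : R => g (t *: x).
have Dphi : forall t : R, is_derive t (1:R) phi (x *m 'J g (t *: x)).
  move=> t.
  have sd := @is_diff_scalel R _ t x.
  have dl : differentiable (fun z : R => z *: x) t by exact: ex_diff.
  have dphi : differentiable phi t.
    exact: (differentiable_comp dl (gd _)).
  apply: DeriveDef; first by apply/derivable1_diffP.
  rewrite deriveE // /phi.
  have -> : (fun t0 : R => g (t0 *: x)) = g \o (fun z : R => z *: x) by [].
  rewrite diff_comp // (@diff_val _ _ _ _ _ _ _ sd) /=.
  by rewrite scale1r /jacobian mul_rV_lin1.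
pose psi := fun s : R => \sum_i (fun _ => 1) i * (phi s 0 i - (fun _ => 0) i) ^+ 2.
have Dpsi : forall t : R, is_derive t (1:R) psi
   (\sum_i (fun _ => 1) i * (2 * (phi t 0 i - (fun _ => 0) i) * (x *m 'J g (t *: x)) 0 i)).
  by move=> t; apply: sumsq_is_derive.
have g0 : g 0 = 0 by rewrite hom mul0mx scaler0.
have psi0 : psi 0 = 0.
  rewrite /psi /phi scale0r g0; apply: big1 => i _; rewrite mxE; lra.
have cont : {within `[0, 1], continuous psi}.
  apply: derivable_within_continuous => s _.
  exact: (@ex_derive _ _ _ _ _ _ _ (Dpsi s)).
have [c c01 Ec] := MVT ltr01 (fun s _ => Dpsi s) cont.
have c0 : 0 < c by move: c01; rewrite in_itv /= => /andP[].
have neg : \sum_i (fun _ => 1) i * (2 * (phi c 0 i - (fun _ => 0) i) * (x *m 'J g (c *: x)) 0 i) <= 0.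
  apply: sumr_le0 => i _.
  have E : phi c 0 i = h * c * (x *m 'J g (c *: x)) 0 i.
    by rewrite /phi {1}hom -scalemxAl scalerA !mxE.
  rewrite E; set z := (x *m 'J g (c *: x)) 0 i.
  have -> : (fun _ => 1) i * (2 * (h * c * z - (fun _ => 0) i) * z) = (h * c) * (2 * z ^+ 2).
    by rewrite /=; ring.
  apply: mulr_le0_ge0; last by rewrite mulr_ge0 // sqr_ge0.
  by rewrite pmulr_lle0 // ltW.
have psi1 : psi 1 <= 0 by move: Ec; rewrite psi0 !subr0 mulr1 => ->.
have psi1' : psi 1 = 0.
  apply/eqP; rewrite eq_le psi1 /=; apply: sumr_ge0 => i _; rewrite mul1r sqr_ge0 //.
apply/matrixP => i j; rewrite (ord1 i) mxE.
have nn : forall k : 'I_n, true -> 0 <= (fun _ => 1) k * (phi 1 0 k - (fun _ => 0) k) ^+ 2.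
  by move=> k _; rewrite /= mul1r sqr_ge0.
have HH := psumr_eq0P nn psi1'.
have := HH j isT.
rewrite /= mul1r subr0 => /eqP; rewrite sqrf_eq0 /phi scale1r => /eqP.
by [].
Qed.
End D.

Theorem corollary1 (R : realType) (n d1 d2 : nat)
  (P : 'M[R]_n) (mu : 'rV[R]_n) (r : 'I_n -> 'I_n -> R) (gamma : R)
  (Vstar : 'rV[R]_n)
  (Phi : 'M[R]_(n, d1)) (g : 'rV[R]_d2 -> 'rV[R]_n) (h C l : R)
  (theta : R -> 'rV[R]_(d1 + d2)) (PiVstar : 'rV[R]_n) :
  stochastic P -> irreducible P -> aperiodic P -> stationary_dist P mu ->
  0 <= gamma -> gamma < 1 ->
  (forall s, Vstar 0 s = exp_reward P r s + gamma * \sum_s' P s s' * Vstar 0 s') ->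
  \rank Phi = minn n d1 ->
  (forall x, differentiable g x) -> continuous (fun x => 'J g x) ->
  homogeneous h g ->
  0 < C -> 0 < l ->
  (forall th, mu_norm mu (resV Phi g th) <= C * powR (eucl_norm th) l) ->
  is_mu_proj mu Phi Vstar PiVstar ->
  (forall t : R, 0 < t ->
     is_derive t 1 theta
       (- (((resV Phi g (theta t) - Vstar) *m (Amat mu gamma P)^T)
             *m ('J (resV Phi g) (theta t))^T))) ->
  (limf_einf (fun t : R => (mu_norm mu (resV Phi g (theta t) - Vstar))%:E)
             (pinfty_nbhs R)
   <= ((1 + (1 + gamma) / (1 - gamma)) * mu_norm mu (Vstar - PiVstar))%:E)%E.
Proof.
move=> sP _ _ [mu0 [_ muP]] g0 g1 _ _ gd _ hom _ _ _ [[w Hw] _] Hder.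
have [hh [hh0 homh]] : exists hh : R, 0 <= hh /\ forall x, g x = hh *: (x *m 'J g x).
  case: (leP 0 h) => hpos; first by exists h.
  by exists 0; split => // x; rewrite scale0r; exact: (@g_zero R d2 n g h hpos gd hom x).
set d := Vstar - PiVstar.
set K := (1 + gamma) / (1 - gamma).
set f := (fun t : R => (mu_norm mu (resV Phi g (theta t) - Vstar))%:E).
rewrite leNgt; apply/negP => Hlt.
rewrite limf_einfE in Hlt.
have [y [V HV Vy] By] := ereal_sup_gt Hlt.
have [c [Bc Hc]] : exists c : R, (1 + K) * mu_norm mu d < c /\
    forall t, V t -> c <= mu_norm mu (resV Phi g (theta t) - Vstar).
  have lb : forall t, V t -> (y <= f t)%E.
    by move=> t Vt; rewrite -Vy; apply: ereal_inf_lbound; exists t.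
  move: lb By; case: y {Vy} => [r0| |] lb By.
  - exists r0; split; first by rewrite -lte_fin.
    by move=> t Vt; rewrite -lee_fin; exact: lb.
  - exists ((1 + K) * mu_norm mu d + 1); split; first lra.
    by move=> t /lb; rewrite /f leNgt ltey.
  - by [].
case: HV => M [Mreal HM].
have Qd0 := @Qf_ge0 R n mu mu0 d.
set s := Num.sqrt (Qf R n mu d).
have s0 : 0 <= s by apply: sqrtr_ge0.
have Eds : Qf R n mu d = s ^+ 2 by rewrite sqr_sqrtr.
have md : mu_norm mu d = s by rewrite mu_normE.
rewrite md in Bc.
have K0 : 0 <= K by apply: divr_ge0; lra.
have c0 : K * s < c by nra.
have cpos : 0 <= c by nra.
set eta := (1 - gamma) * (c ^+ 2 - K ^+ 2 * s ^+ 2).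
have eta0 : 0 < eta.
  apply: mulr_gt0; first lra.
  rewrite subr_gt0; have : 0 <= K * s by rewrite mulr_ge0.
  nra.
pose W : 'rV[R]_(d1 + d2) := row_mx w 0.
pose cw := fun j : 'I_(d1 + d2) => if (j < d1)%N then 1 else hh.
have cw0 : forall j, 0 <= cw j by move=> j; rewrite /cw; case: ifP.
pose L := fun t : R => \sum_j cw j * (theta t 0 j - W 0 j) ^+ 2.
pose Dth := fun t : R => (- (((resV Phi g (theta t) - Vstar) *m (Amat mu gamma P)^T)
             *m ('J (resV Phi g) (theta t))^T)).
pose DL := fun t : R => \sum_j cw j * (2 * (theta t 0 j - W 0 j) * Dth t 0 j).
have HL : forall t : R, 0 < t -> is_derive t (1:R) L (DL t).
  by move=> t t0; apply: sumsq_is_derive; exact: Hder.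
have L0 : forall t, 0 <= L t.
  by move=> t; apply: sumr_ge0 => j _; rewrite mulr_ge0 // sqr_ge0.
have DLb : forall t, 0 < t ->
   DL t <= - (1 - gamma) * Qf R n mu (resV Phi g (theta t) - Vstar) + (1 + gamma) ^+ 2 / (1 - gamma) * Qf R n mu d.
  move=> t t0.
  set th := theta t.
  set e := resV Phi g th - Vstar.
  pose u : 'rV[R]_(d1 + d2) := \row_j (cw j * (th 0 j - W 0 j)).
  have E1 : DL t = 2 * (u *m (Dth t)^T) 0 0.
    rewrite /DL !mxE mulr_sumr; apply: eq_bigr => j _; rewrite !mxE; ring.
  have Lu : lsubmx u = lsubmx th - w.
    apply/matrixP => i j; rewrite (ord1 i) mxE mxE /W row_mxEl /cw /= ltn_ord [in RHS]mxE [in RHS]mxE mxE; ring.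
  have Ru : rsubmx u = hh *: rsubmx th.
    apply/matrixP => i j; rewrite (ord1 i) mxE mxE /W row_mxEr /cw /= ltnNge leq_addr /= !mxE; ring.
  have uJ : u *m 'J (resV Phi g) th = e + d.
    rewrite (@resVJ R n d1 d2 Phi g gd) Lu Ru -scalemxAl -homh.
    rewrite /e /d /resV Hw mulmxBl.
    apply/matrixP => i j; rewrite !mxE; lra.
  have E2 : (u *m (Dth t)^T) 0 0 = - (((e + d) *m Amat mu gamma P *m e^T) 0 0).
    rewrite /Dth -/th -/e linearN /= !trmx_mul !trmxK mulmxN !mulmxA uJ.
    by rewrite mxE.
  have LB := @lyap_bound R n mu mu0 gamma P e d g0 g1 sP muP.
  have E3 : (1 + gamma) ^+ 2 / (1 - gamma) * Qf R n mu d =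
    2 * ((1 + gamma) ^+ 2 / (2 * (1 - gamma)) * Qf R n mu d).
    field; apply/eqP; lra.
  have E4 : - (1 - gamma) * Qf R n mu e = 2 * (- ((1 - gamma) / 2) * Qf R n mu e) by field.
  rewrite E1 E2 E3 E4; lra.
pose T := `|M| + 1.
have MT : M < T by rewrite /T; have := real_ler_norm Mreal; lra.
have T0 : 0 < T by rewrite /T; have := normr_ge0 M; lra.
have key : forall t, T <= t -> DL t <= - eta.
  move=> t Tt.
  have t0 : 0 < t by lra.
  have Vt : V t by apply: HM; lra.
  have := Hc t Vt; rewrite mu_normE => ct.
  have Qe0 := @Qf_ge0 R n mu mu0 (resV Phi g (theta t) - Vstar).
  move: ct (DLb t t0); set q := Qf R n mu (resV Phi g (theta t) - Vstar) => ct Db.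
  have sq0 := sqrtr_ge0 q.
  have sqq := sqr_sqrtr Qe0.
  have cq : c ^+ 2 <= q.
    rewrite -/q in sqq; rewrite -sqq; nra.
  have E : (1 + gamma) ^+ 2 / (1 - gamma) * Qf R n mu d = (1 - gamma) * (K ^+ 2 * s ^+ 2).
    rewrite Eds /K; field; apply/eqP; lra.
  rewrite E in Db; rewrite /eta.
  nra.
pose t1 := T + L T / eta + 1.
have LTe : 0 <= L T / eta by apply: divr_ge0; [exact: L0| exact: ltW].
have Tt1 : T < t1 by rewrite /t1; lra.
have cont : {within `[T, t1], continuous L}.
  apply: derivable_within_continuous => x; rewrite in_itv /= => /andP[Tx _].
  have x0 : 0 < x by lra.
  exact: (@ex_derive _ _ _ _ _ _ _ (HL x x0)).
have dd : forall x, x \in `]T, t1[ -> is_derive x (1:R) L (DL x).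
  by move=> x; rewrite in_itv /= => /andP[Tx _]; apply: HL; lra.
have [xi xiI Exi] := MVT Tt1 dd cont.
have Txi : T <= xi by move: xiI; rewrite in_itv /= => /andP[+ _]; apply: ltW.
have kx := key xi Txi.
have Lt1 := L0 t1.
have LT := L0 T.
have E1 : t1 - T = L T / eta + 1 by rewrite /t1; ring.
rewrite E1 in Exi.
have E2 : eta * (L T / eta + 1) = L T + eta by field; apply/eqP; lra.
have : DL xi * (L T / eta + 1) <= - eta * (L T / eta + 1).
  by apply: ler_wpM2r => //; lra.
nra.
Qed.
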